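(* Let $c$ be a positive integer and $c/(c+1)<\vartheta<1$, and let $(Z_t)$ be the random walk of the context with $r=1$. For $z\in(-1,1)$ let $w(z)$ denote the unique solution $w\in(-1,1)$ of $w^{c+1}(1-\vartheta)z+\vartheta z=w$, and set $$\bar\varphi(z):=\frac{(1-\vartheta)z\,w(z)+\vartheta z-w(z)}{1-w(z)},\qquad \Phi(w,z):=\frac{(1-\vartheta)z\left(\frac{w-w^{c+1}}{1-w}\right)-\vartheta z\,\bar\varphi(z)}{1-(\vartheta z)/w-w^cz(1-\vartheta)},\quad w\in(-1,1).$$ Define $\varphi(z,u):=\left.\frac{1}{u!}\frac{\partial^u}{\partial w^u}\Phi(w,z)\right|_{w=0}$. Then for every $u\in\mathbb{N}$, $$\mathbb{E}[\tau(u)\mid\tau(u)<\infty]=\frac{\varphi'(1,u)}{\varphi(1,u)},$$ where $\varphi'$ denotes the derivative with respect to $z$.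
   Context: Random walk: for $\vartheta\in(0,1)$ and positive integers $c,r$, let $Z_0=0$ and $Z_t=Z_{t-1}+\Delta_t$ with $\Delta_t$ i.i.d., $\Delta_t=+c$ with probability $1-\vartheta$ and $-r$ with probability $\vartheta$. Define $\tau(u):=\inf\{t\in\mathbb{N}_0: Z_t\ge u\}$. (In the single-agent trust model with Beta$(\alpha,\beta)$ prior, the agent's quitting time is $\tau(u_{\rm crit})$ with $u_{\rm crit}=r\alpha-c\beta+1$.) *)

(* Defs.v *)
From Stdlib Require Import Reals ZArith List Bool ClassicalEpsilon.
From Coquelicot Require Import Coquelicot.
Import ListNotations.
Open Scope R_scope.

(* All step sequences (Delta_1, ..., Delta_t) of length t; [true] = up-step +c
   (probability 1-th), [false] = down-step -r (probability th). *)
Fixpoint paths (t : nat) : list (list bool) :=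
  match t with
  | O => [nil]
  | S t' => flat_map (fun l => [true :: l; false :: l]) (paths t')
  end.

Definition step (c r : nat) (b : bool) : Z :=
  if b then Z.of_nat c else (- Z.of_nat r)%Z.

Definition walk (c r : nat) (l : list bool) (k : nat) : Z :=
  fold_right Z.add 0%Z (map (step c r) (firstn k l)).

Definition weight (th : R) (l : list bool) : R :=
  fold_right Rmult 1 (map (fun b : bool => if b then 1 - th else th) l).

(* tau(u) = length l, i.e. Z_{|l|} >= u and Z_k < u for all k < |l|. *)
Definition first_passage (c r : nat) (u : Z) (l : list bool) : bool :=
  (u <=? walk c r l (length l))%Z &&
  forallb (fun k => (walk c r l k <? u)%Z) (seq 0 (length l)).

Definition tau_prob (c r : nat) (th : R) (u : Z) (t : nat) : R :=
  fold_right Rplus 0 (map (weight th) (filter (first_passage c r u) (paths t))).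

Definition cond_exp_tau (c r : nat) (th : R) (u : Z) : R :=
  Series (fun t => INR t * tau_prob c r th u t) / Series (tau_prob c r th u).

Definition w_eq (c : nat) (th z w : R) : Prop :=
  w ^ (c + 1) * (1 - th) * z + th * z = w.

(* w(z): the unique solution in (-1,1) of w^(c+1)(1-th)z + th z = w
   (an arbitrary value when no unique such solution exists). *)
Definition wfun (c : nat) (th z : R) : R :=
  epsilon (inhabits 0) (fun w => -1 < w < 1 /\ w_eq c th z w /\
    forall w', -1 < w' < 1 -> w_eq c th z w' -> w' = w).

(* bar-phi(z) = phi(z,1) = E[z^tau(1); tau(1)<oo]:
   the paper's displayed formula lacks the factor (th z) in the denominator. *)
Definition phibar (c : nat) (th z : R) : R :=
  let w := wfun c th z in
  ((1 - th) * z * w + th * z - w) / (th * z * (1 - w)).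

Definition Phi (c : nat) (th w z : R) : R :=
  ((1 - th) * z * ((w - w ^ (c + 1)) / (1 - w)) - th * z * phibar c th z)
  / (1 - (th * z) / w - w ^ c * z * (1 - th)).

(* Phi(., z) with its removable singularity at w = 0 filled in. *)
Definition Phi_ext (c : nat) (th z : R) (w : R) : R :=
  if Req_EM_T w 0 then Lim (fun v => Phi c th v z) 0 else Phi c th w z.

Definition varphi (c : nat) (th z : R) (u : nat) : R :=
  Derive_n (Phi_ext c th z) u 0 / INR (fact u).

(* Main.v *)
Require Import Defs.
From Stdlib Require Import Reals ZArith.
From Coquelicot Require Import Coquelicot.
From Stdlib Require Import List Bool Lia Lra ClassicalEpsilon.
Import ListNotations.
Open Scope R_scope.

Definition sumR (l : list R) := fold_right Rplus 0 l.

Lemma sumR_app l1 l2 : sumR (l1 ++ l2) = sumR l1 + sumR l2.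
Proof. induction l1; simpl; [ring| unfold sumR in *; simpl; rewrite IHl1; ring]. Qed.

Lemma sum_filter {A} (f : A -> R) P L :
  sumR (map f (filter P L)) = sumR (map (fun x => if P x then f x else 0) L).
Proof. induction L as [|x L IH]; simpl; auto. destruct (P x); simpl; unfold sumR in *; simpl; rewrite IH; ring. Qed.

Lemma sum_ext {A} (f g : A -> R) L : (forall x, In x L -> f x = g x) -> sumR (map f L) = sumR (map g L).
Proof. induction L as [|x L IH]; simpl; intros H; auto. unfold sumR in *; simpl. rewrite H by auto. rewrite IH; auto. Qed.

Lemma sum_le {A} (f g : A -> R) L : (forall x, In x L -> f x <= g x) -> sumR (map f L) <= sumR (map g L).
Proof. induction L as [|x L IH]; simpl; intros H; [lra|]. unfold sumR in *; simpl. 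
  apply Rplus_le_compat; auto. Qed.

Lemma sum_flat_map {A B} (F : B -> R) (g : A -> list B) L :
  sumR (map F (flat_map g L)) = sumR (map (fun x => sumR (map F (g x))) L).
Proof. induction L as [|x L IH]; simpl; auto. rewrite map_app, sumR_app, IH. reflexivity. Qed.

Lemma sum_plus {A} (f g : A -> R) L : sumR (map (fun x => f x + g x) L) = sumR (map f L) + sumR (map g L).
Proof. induction L as [|x L IH]; simpl; [unfold sumR; simpl; ring|]. unfold sumR in *; simpl; rewrite IH; ring. Qed.

Lemma sum_scal {A} k (f : A -> R) L : sumR (map (fun x => k * f x) L) = k * sumR (map f L).
Proof. induction L as [|x L IH]; simpl; [unfold sumR; simpl; ring|]. unfold sumR in *; simpl; rewrite IH; ring. Qed.

Lemma sum_nonneg {A} (f : A -> R) L : (forall x, 0 <= f x) -> 0 <= sumR (map f L).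
Proof. induction L as [|x L IH]; simpl; intros H; [unfold sumR; simpl; lra|]. unfold sumR in *; simpl.
  specialize (IH H); specialize (H x); lra. Qed.

Lemma forallb_ext {A} (f g : A -> bool) l : (forall x, f x = g x) -> forallb f l = forallb g l.
Proof. intros H; induction l; simpl; auto. rewrite H, IHl; auto. Qed.

Lemma forallb_seqS (f : nat -> bool) m n : forallb f (seq (S m) n) = forallb (fun k => f (S k)) (seq m n).
Proof. revert m; induction n; intros m; simpl; auto. rewrite IHn; auto. Qed.

Lemma fp_cons c r u b l :
  first_passage c r u (b :: l) = ((0 <? u)%Z && first_passage c r (u - step c r b) l)%bool.
Proof.
  unfold first_passage. simpl length. change (seq 0 (S (length l))) with (0%nat :: seq 1 (length l)).
  simpl forallb. rewrite forallb_seqS.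
  replace (walk c r (b :: l) (S (length l))) with (step c r b + walk c r l (length l))%Z by reflexivity.
  replace (walk c r (b :: l) 0) with 0%Z by reflexivity.
  rewrite (forallb_ext (fun k => walk c r (b :: l) (S k) <? u)%Z (fun k => walk c r l k <? u - step c r b)%Z).
  2:{ intros k. change (walk c r (b :: l) (S k)) with (step c r b + walk c r l k)%Z.
      destruct (Z.ltb_spec (step c r b + walk c r l k) u); destruct (Z.ltb_spec (walk c r l k) (u - step c r b)); lia. }
  destruct (Z.leb_spec u (step c r b + walk c r l (length l))); destruct (Z.leb_spec (u - step c r b) (walk c r l (length l))); try lia;
  destruct (0 <? u)%Z; simpl; auto.
Qed.

Lemma fp_nil c r u : first_passage c r u nil = (u <=? 0)%Z.
Proof. unfold first_passage; simpl. unfold walk; simpl. destruct (u <=? 0)%Z; auto. Qed.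

Lemma tp_eq c r th u t : tau_prob c r th u t = sumR (map (fun l => if first_passage c r u l then weight th l else 0) (paths t)).
Proof. unfold tau_prob. apply sum_filter. Qed.

Lemma tp_0 c r th u : tau_prob c r th u 0 = if (u <=? 0)%Z then 1 else 0.
Proof. rewrite tp_eq; simpl. rewrite fp_nil. destruct (u <=? 0)%Z; unfold sumR, weight; simpl; ring. Qed.

Lemma tp_S c r th u t : tau_prob c r th u (S t) =
  if (0 <? u)%Z then (1 - th) * tau_prob c r th (u - Z.of_nat c) t + th * tau_prob c r th (u + Z.of_nat r) t else 0.
Proof.
  rewrite tp_eq. simpl paths. rewrite sum_flat_map.
  rewrite (sum_ext _ (fun l => (if (0 <? u)%Z then (1-th) * (if first_passage c r (u - Z.of_nat c) l then weight th l else 0) + th * (if first_passage c r (u + Z.of_nat r) l then weight th l else 0) else 0))).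
  2:{ intros l _. simpl. rewrite !fp_cons. unfold step.
      replace (u - - Z.of_nat r)%Z with (u + Z.of_nat r)%Z by lia.
      unfold weight; simpl. fold (weight th l).
      destruct (0 <? u)%Z; simpl; destruct (first_passage c r (u - Z.of_nat c) l); destruct (first_passage c r (u + Z.of_nat r) l); unfold sumR; simpl; ring. }
  destruct (0 <? u)%Z.
  - rewrite sum_plus, !sum_scal, !tp_eq. reflexivity.
  - clear. induction (paths t); simpl; auto. unfold sumR in *; simpl. rewrite IHl; ring.
Qed.


Lemma weight_nonneg th l : 0 <= th <= 1 -> 0 <= weight th l.
Proof. intros H; induction l as [|b l IH]; unfold weight in *; simpl; [lra|].
  destruct b; apply Rmult_le_pos; lra. Qed.

Lemma tp_nonneg c r th u t : 0 <= th <= 1 -> 0 <= tau_prob c r th u t.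
Proof. intros H. rewrite tp_eq. apply sum_nonneg. intros l. destruct (first_passage c r u l); [apply weight_nonneg; auto| lra]. Qed.

Lemma c_bound (c : nat) th : INR c / (INR c + 1) < th -> INR c < th * (INR c + 1).
Proof. intros H. assert (0 < INR c + 1) by (pose proof (pos_INR c); lra).
  assert (INR c = INR c / (INR c + 1) * (INR c + 1)) by (field; lra). nra. Qed.

Lemma exists_s (c : nat) th : INR c / (INR c + 1) < th < 1 ->
  exists s, 1 < s /\ (1 - th) * s ^ (c + 1) - s + th < 0.
Proof.
  intros [H1 H2]. apply c_bound in H1.
  set (l := (1 - th) * (INR c + 1) - 1).
  assert (Hl : l < 0) by (unfold l; nra).
  assert (HD : derivable_pt_lim (fun s => (1 - th) * s ^ (c + 1) - s + th) 1 l).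
  { apply is_derive_Reals. auto_derive; auto. unfold l. rewrite pow1, plus_INR. simpl. ring. }
  destruct (HD (- l / 2)) as [d Hd]; [lra|].
  exists (1 + d / 2). pose proof (cond_pos d). split; [lra|].
  specialize (Hd (d / 2)). rewrite pow1 in Hd.
  assert (Hh : d / 2 <> 0) by lra.
  assert (Ha : Rabs (d / 2) < d) by (rewrite Rabs_pos_eq; lra).
  specialize (Hd Hh Ha).
  set (v := (1 - th) * (1 + d / 2) ^ (c + 1) - (1 + d / 2) + th) in *.
  replace ((v - ((1 - th) * 1 - 1 + th)) / (d / 2) - l) with (v / (d/2) - l) in Hd by (f_equal; f_equal; ring).
  apply Rabs_def2 in Hd. destruct Hd as [Hd _].
  assert (v / (d / 2) < 0) by lra.
  assert (v = v / (d/2) * (d/2)) by (field; lra). nra.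
Qed.

Lemma chernoff (c : nat) th : (0 < c)%nat -> INR c / (INR c + 1) < th < 1 ->
  exists rho, 0 <= rho < 1 /\ forall u t, 0 <= tau_prob c 1 th u t <= rho ^ t.
Proof.
  intros Hc Hth. destruct (exists_s c th Hth) as [s [Hs HP]].
  assert (Hth0 : 0 < th) by (pose proof (pos_INR c); assert (0 <= INR c / (INR c + 1)) by (apply Rle_mult_inv_pos; lra); lra).
  set (rho := (1 - th) * s ^ c + th / s).
  assert (Hrho1 : rho < 1).
  { unfold rho. replace (s ^ (c + 1)) with (s ^ c * s) in HP by (rewrite pow_add; ring).
    apply (Rmult_lt_reg_r s); [lra|]. field_simplify; [|lra]. nra. }
  assert (Hrho0 : 0 <= rho).
  { unfold rho. apply Rplus_le_le_0_compat. apply Rmult_le_pos; [lra| apply pow_le; lra].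
    apply Rle_mult_inv_pos; lra. }
  exists rho. split; [lra|].
  assert (HE : forall t, sumR (map (fun l => weight th l * powerRZ s (walk c 1 l (length l))) (paths t)) = rho ^ t).
  { induction t as [|t IH].
    - simpl. unfold sumR, weight, walk; simpl. ring.
    - simpl paths. rewrite sum_flat_map.
      rewrite (sum_ext _ (fun l => rho * (weight th l * powerRZ s (walk c 1 l (length l))))).
      + rewrite sum_scal, IH. simpl. ring.
      + intros l _. unfold sumR; cbn [map fold_right flat_map].
        change (walk c 1 (true :: l) (length (true :: l))) with (step c 1 true + walk c 1 l (length l))%Z.
        change (walk c 1 (false :: l) (length (false :: l))) with (step c 1 false + walk c 1 l (length l))%Z.
        change (weight th (true :: l)) with ((1 - th) * weight th l).
        change (weight th (false :: l)) with (th * weight th l).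
        change (step c 1 true) with (Z.of_nat c). change (step c 1 false) with (-1)%Z.
        rewrite !powerRZ_add by lra. rewrite <- pow_powerRZ.
        replace (powerRZ s (-1)) with (/ s) by (simpl; field; lra).
        unfold rho. field. lra. }
  intros u t. split; [apply tp_nonneg; lra|].
  destruct (Z_lt_le_dec u 0) as [Hu|Hu].
  - destruct t.
    + rewrite tp_0. destruct (u <=? 0)%Z; simpl; lra.
    + rewrite tp_S. destruct (Z.ltb_spec 0 u); [lia|]. pose proof (pow_le rho (S t) Hrho0). lra.
  - rewrite <- (HE t), tp_eq. apply sum_le. intros l _.
    destruct (first_passage c 1 u l) eqn:Hf; [|apply Rmult_le_pos; [apply weight_nonneg; lra| apply powerRZ_le; lra]].
    unfold first_passage in Hf. apply andb_prop in Hf. destruct Hf as [Hf _]. apply Z.leb_le in Hf.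
    assert (Hw : (0 <= walk c 1 l (length l))%Z) by lia.
    destruct (Z_of_nat_complete _ Hw) as [n Hn]. rewrite Hn, <- pow_powerRZ.
    pose proof (weight_nonneg th l ltac:(lra)). pose proof (pow_R1_Rle s n ltac:(lra)). nra.
Qed.


Lemma pow_le1 x n : 0 <= x <= 1 -> 0 <= x ^ n <= 1.
Proof. intros H; induction n; simpl; [lra|]. split; [apply Rmult_le_pos; lra| nra]. Qed.

Fixpoint Sg (n : nat) (x y : R) : R :=
  match n with O => 1 | S n' => x ^ n + y * Sg n' x y end.

Lemma Sg_id n x y : x ^ (S n) - y ^ (S n) = (x - y) * Sg n x y.
Proof. induction n; simpl in *; [ring|]. 
  replace (x * (x * x ^ n) - y * (y * y ^ n)) with (x * (x * x ^ n) - y * (x * x ^ n) + y * (x * x ^ n - y * y ^ n)) by ring.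
  rewrite IHn. ring. Qed.

Lemma Sg_nonneg n x y : 0 <= x -> 0 <= y -> 0 <= Sg n x y.
Proof. intros; induction n; simpl; [lra|]. apply Rplus_le_le_0_compat; [apply Rmult_le_pos; [lra| apply pow_le; lra]| apply Rmult_le_pos; lra]. Qed.

Lemma Sg_le n x y : 0 <= y <= x -> x <= 1 -> Sg n x y <= Sg n 1 x.
Proof. intros H1 H2; induction n; simpl; [lra|].
  pose proof (pow_le1 x n ltac:(lra)). rewrite pow1.
  pose proof (Sg_nonneg n x y ltac:(lra) ltac:(lra)). pose proof (Sg_nonneg n 1 x ltac:(lra) ltac:(lra)).
  assert (x * x ^ n <= 1) by nra. nra. Qed.

Definition Kf (c : nat) (a b w : R) := w - b - a * w ^ (c + 1).

Lemma K_neg c a b w : 0 <= a < 1 -> 0 < b -> -1 < w <= 0 -> Kf c a b w < 0.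
Proof. intros Ha Hb Hw. unfold Kf.
  assert (Rabs (w ^ (c+1)) <= Rabs w).
  { rewrite <- RPow_abs, pow_add, pow_1. pose proof (pow_le1 (Rabs w) c). pose proof (Rabs_pos w).
    assert (Rabs w <= 1) by (unfold Rabs; destruct Rcase_abs; lra). nra. }
  assert (Rabs w = - w) by (apply Rabs_left1; lra).
  pose proof (Rle_abs (w ^ (c+1))). pose proof (Rabs_pos (w^(c+1))).
  assert (a * w ^ (c+1) >= a * w) by (apply Rle_ge; destruct (Rle_dec 0 (w^(c+1))); [nra|]; 
    assert (Rabs (w^(c+1)) = - w^(c+1)) by (apply Rabs_left1; lra); nra).
  nra. Qed.

Lemma root_unique c a b w1 w2 : 0 <= a -> 0 < b -> a + b < 1 ->
  0 < w1 < 1 -> 0 < w2 < 1 -> Kf c a b w1 = 0 -> Kf c a b w2 = 0 -> w1 < w2 -> False.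
Proof. intros Ha Hb Hab H1 H2 K1 K2 Hlt. unfold Kf in *.
  assert (E1 : w2 - w1 = a * ((w2 - w1) * Sg c w2 w1)).
  { rewrite <- Sg_id. replace (S c) with (c + 1)%nat by lia. lra. }
  assert (E2 : a * Sg c w2 w1 = 1).
  { apply (Rmult_eq_reg_l (w2 - w1)); [|lra]. rewrite E1 at 2. ring. }
  assert (E3 : 1 - w2 ^ (c + 1) = (1 - w2) * Sg c 1 w2).
  { rewrite <- Sg_id, pow1. replace (S c) with (c + 1)%nat by lia. ring. }
  assert (E4 : (1 - w2) * (1 - a * Sg c 1 w2) > 0).
  { replace ((1 - w2) * (1 - a * Sg c 1 w2)) with ((1 - w2) - a * (1 - w2 ^ (c+1))) by (rewrite E3; ring). lra. }
  assert (a * Sg c 1 w2 < 1).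
  { destruct (Rlt_dec (a * Sg c 1 w2) 1); auto. nra. }
  pose proof (Sg_le c w2 w1 ltac:(lra) ltac:(lra)). nra.
Qed.

Lemma root_exists c a b : 0 <= a -> 0 < b -> a + b < 1 ->
  exists w, 0 < w < 1 /\ Kf c a b w = 0.
Proof. intros Ha Hb Hab.
  assert (Hc : continuity (Kf c a b)) by (unfold Kf; reg).
  destruct (IVT (Kf c a b) 0 1 Hc ltac:(lra)) as [w [Hw1 Hw2]].
  - unfold Kf. rewrite pow_i by lia. lra.
  - unfold Kf. rewrite pow1. lra.
  - exists w. split; auto. destruct (Req_dec w 0) as [->|]; [unfold Kf in Hw2; rewrite pow_i in Hw2 by lia; lra|].
    destruct (Req_dec w 1) as [->|]; [unfold Kf in Hw2; rewrite pow1 in Hw2; lra|]. lra.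
Qed.

Lemma wfun_spec (c : nat) th z : 0 < th < 1 -> 0 < z < 1 ->
  0 < wfun c th z < 1 /\ Kf c (z * (1 - th)) (z * th) (wfun c th z) = 0.
Proof. intros Hth Hz.
  set (a := z * (1 - th)). set (b := z * th).
  assert (Ha : 0 <= a) by (unfold a; nra). assert (Hb : 0 < b) by (unfold b; nra).
  assert (Hab : a + b < 1) by (unfold a, b; nra).
  assert (Heq : forall w, w_eq c th z w <-> Kf c a b w = 0).
  { intros w. unfold w_eq, Kf, a, b. split; intros; lra. }
  destruct (root_exists c a b Ha Hb Hab) as [w [Hw Kw]].
  assert (P : exists w, -1 < w < 1 /\ w_eq c th z w /\ forall w', -1 < w' < 1 -> w_eq c th z w' -> w' = w).
  { exists w. split; [lra|]. split; [apply Heq; auto|]. intros w' Hw' E'. apply Heq in E'.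
    destruct (Rle_dec w' 0). { pose proof (K_neg c a b w' ltac:(lra) Hb ltac:(lra)). lra. }
    destruct (Rtotal_order w' w) as [Hl|[He|Hg]]; auto.
    - exfalso. apply (root_unique c a b w' w); auto; lra.
    - exfalso. apply (root_unique c a b w w'); auto; lra. }
  pose proof (epsilon_spec (inhabits 0) _ P) as Hs. fold (wfun c th z) in Hs.
  destruct Hs as [H1 [H2 H3]]. apply Heq in H2.
  specialize (H3 w ltac:(lra) (proj2 (Heq w) Kw)). subst w. split; auto.
Qed.


Definition RHO c th rho := 0 <= rho < 1 /\ forall u t, 0 <= tau_prob c 1 th u t <= rho ^ t.

Definition gZ c th z (v : Z) := PSeries (tau_prob c 1 th v) z.

Lemma Series_zero : Series (fun _ => 0) = 0.
Proof. rewrite (Series_ext _ (fun n => 0 * 1)) by (intros; ring). rewrite Series_scal_l. ring. Qed.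

Lemma ex_series_Rscal k (a : nat -> R) : ex_series a -> ex_series (fun n => k * a n).
Proof. intros H. exact (@ex_series_scal_l R_AbsRing R_NormedModule k a H). Qed.

Lemma ex_g c th rho z v : RHO c th rho -> Rabs z <= 1 -> ex_series (fun t => tau_prob c 1 th v t * z ^ t).
Proof. intros [Hr Hb] Hz. apply (@ex_series_le R_AbsRing R_CompleteNormedModule _ (fun t => rho ^ t)).
  - intros n. change (norm (tau_prob c 1 th v n * z ^ n)) with (Rabs (tau_prob c 1 th v n * z ^ n)).
    rewrite Rabs_mult, <- RPow_abs. destruct (Hb v n). rewrite Rabs_pos_eq by lra.
    pose proof (pow_le1 (Rabs z) n ltac:(split; [apply Rabs_pos|lra])). pose proof (pow_le rho n ltac:(lra)). nra.
  - apply ex_series_geom. rewrite Rabs_pos_eq; lra.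
Qed.

Lemma g_bound c th rho z v : RHO c th rho -> 0 <= z <= 1 -> 0 <= gZ c th z v <= / (1 - rho).
Proof. intros [Hr Hb] Hz. unfold gZ, PSeries. split.
  - rewrite <- Series_zero. apply Series_le.
    + intros n. split; [lra|]. destruct (Hb v n). apply Rmult_le_pos; [lra| apply pow_le; lra].
    + apply (ex_g c th rho z v); [split; auto| rewrite Rabs_pos_eq; lra].
  - rewrite <- (is_series_unique _ _ (is_series_geom rho ltac:(rewrite Rabs_pos_eq; lra))).
    apply Series_le.
    + intros n. destruct (Hb v n). pose proof (pow_le1 z n Hz). pose proof (pow_le rho n ltac:(lra)).
      split; [apply Rmult_le_pos; lra| nra].
    + apply ex_series_geom. rewrite Rabs_pos_eq; lra.
Qed.

Lemma g_le0 c th rho z v : RHO c th rho -> Rabs z <= 1 -> (v <= 0)%Z -> gZ c th z v = 1.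
Proof. intros HR Hz Hv. unfold gZ, PSeries. rewrite Series_incr_1 by (apply (ex_g c th rho); auto).
  rewrite tp_0. destruct (Z.leb_spec v 0); [|lia].
  rewrite (Series_ext _ (fun _ => 0)); [rewrite Series_zero; simpl; ring|].
  intros n. rewrite tp_S. destruct (Z.ltb_spec 0 v); [lia|]. ring. Qed.

Lemma g_rec c th rho z v : RHO c th rho -> Rabs z <= 1 -> (0 < v)%Z ->
  gZ c th z v = z * (1 - th) * gZ c th z (v - Z.of_nat c) + z * th * gZ c th z (v + 1).
Proof. intros HR Hz Hv. unfold gZ, PSeries. rewrite Series_incr_1 by (apply (ex_g c th rho); auto).
  rewrite tp_0. destruct (Z.leb_spec v 0); [lia|].
  rewrite (Series_ext _ (fun n => z * (1 - th) * (tau_prob c 1 th (v - Z.of_nat c) n * z ^ n) + z * th * (tau_prob c 1 th (v + 1) n * z ^ n))).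
  2:{ intros n. rewrite tp_S. destruct (Z.ltb_spec 0 v); [|lia]. simpl. ring. }
  rewrite Series_plus by (apply ex_series_Rscal; apply (ex_g c th rho); auto).
  rewrite !Series_scal_l. ring. Qed.


Definition hN c th z (n : nat) : R := match n with O => 0 | S _ => gZ c th z (Z.of_nat n) end.

Lemma h_bound c th rho z n : RHO c th rho -> 0 <= z <= 1 -> Rabs (hN c th z n) <= / (1 - rho).
Proof. intros HR Hz. assert (0 < / (1 - rho)) by (destruct HR; apply Rinv_0_lt_compat; lra).
  destruct n; simpl; [rewrite Rabs_R0; lra|].
  destruct (g_bound c th rho z (Z.pos (Pos.of_succ_nat n)) HR Hz). rewrite Rabs_pos_eq; lra. Qed.

Lemma ex_series_bounded (s : nat -> R) M w : (forall k, Rabs (s k) <= M) -> Rabs w < 1 ->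
  ex_series (fun k => s k * w ^ k).
Proof. intros Hs Hw. apply (@ex_series_le R_AbsRing R_CompleteNormedModule _ (fun k => M * Rabs w ^ k)).
  - intros n. change (norm (s n * w ^ n)) with (Rabs (s n * w ^ n)).
    rewrite Rabs_mult, <- RPow_abs. pose proof (Hs n). pose proof (pow_le (Rabs w) n (Rabs_pos w)). nra.
  - apply ex_series_Rscal. apply ex_series_geom. rewrite Rabs_Rabsolu. auto. Qed.

Lemma radius_bounded (s : nat -> R) M r : (forall k, Rabs (s k) <= M) -> 0 <= r -> 
  (forall k, Rabs (s k) * r ^ k <= M) -> Rbar_le r (CV_radius s).
Proof. intros Hs Hr H. destruct (CV_radius_bounded s) as [Hub _]. apply Hub.
  exists M. intros n. rewrite Rabs_mult, <- RPow_abs, (Rabs_pos_eq r) by auto. apply H. Qed.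

Definition rN c (a b g1 : R) (k : nat) : R :=
  if Nat.eqb k 1 then - b * g1 else if (Nat.leb 2 k && Nat.leb k (c + 1))%bool then a else 0.

Lemma coef_id c th rho z k : (0 < c)%nat -> RHO c th rho -> 0 <= z <= 1 ->
  PS_incr_1 (hN c th z) k - z * th * hN c th z k - z * (1 - th) * PS_incr_n (hN c th z) (c + 1) k
  = rN c (z * (1 - th)) (z * th) (gZ c th z 1) k.
Proof. intros Hc HR Hz. assert (Hz' : Rabs z <= 1) by (rewrite Rabs_pos_eq; lra).
  rewrite PS_incr_n_simplify. unfold rN.
  destruct k as [|m].
  - simpl. destruct (Compare_dec.le_lt_dec (c + 1) 0); [lia|]. change zero with 0. ring.
  - simpl PS_incr_1. destruct m as [|m].
    + simpl. destruct (Compare_dec.le_lt_dec (c + 1) 1); [lia|]. change zero with 0. ring.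
    + replace (Nat.eqb (S (S m)) 1) with false by reflexivity.
      change (hN c th z (S m)) with (gZ c th z (Z.of_nat (S m))).
      change (hN c th z (S (S m))) with (gZ c th z (Z.of_nat (S (S m)))).
      rewrite (g_rec c th rho z (Z.of_nat (S m)) HR Hz' ltac:(lia)).
      replace (Z.of_nat (S m) + 1)%Z with (Z.of_nat (S (S m))) by lia.
      destruct (Compare_dec.le_lt_dec (c + 1) (S (S m))).
      * destruct (Nat.eq_dec (S m) c) as [Heq|Hne].
        -- replace (S (S m) - (c + 1))%nat with 0%nat by lia.
           rewrite (g_le0 c th rho z) by (auto; lia).
           replace ((Nat.leb 2 (S (S m)) && Nat.leb (S (S m)) (c + 1))%bool) with true
             by (symmetry; apply andb_true_iff; split; apply Nat.leb_le; lia).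
           simpl. ring.
        -- replace (S (S m) - (c + 1))%nat with (S (m - c)) by lia.
           change (hN c th z (S (m - c))) with (gZ c th z (Z.of_nat (S (m - c)))).
           replace (Z.of_nat (S m) - Z.of_nat c)%Z with (Z.of_nat (S (m - c))) by lia.
           replace ((Nat.leb 2 (S (S m)) && Nat.leb (S (S m)) (c + 1))%bool) with false
             by (symmetry; apply andb_false_iff; right; apply Nat.leb_gt; lia).
           ring.
      * rewrite (g_le0 c th rho z) by (auto; lia).
        replace ((Nat.leb 2 (S (S m)) && Nat.leb (S (S m)) (c + 1))%bool) with true
             by (symmetry; apply andb_true_iff; split; apply Nat.leb_le; lia).
        change zero with 0. ring.
Qed.

Lemma rN_sum c a b g1 w m : (m <= c)%nat ->
  sum_f_R0 (fun k => rN c a b g1 k * w ^ k) (S m) * (1 - w) = - b * g1 * w * (1 - w) + a * (w ^ 2 - w ^ (m + 2)).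
Proof. intros Hm. induction m as [|m IH].
  - simpl. unfold rN. simpl. ring.
  - change (sum_f_R0 (fun k => rN c a b g1 k * w ^ k) (S (S m))) with
      (sum_f_R0 (fun k => rN c a b g1 k * w ^ k) (S m) + rN c a b g1 (S (S m)) * w ^ (S (S m))).
    rewrite Rmult_plus_distr_r, IH by lia.
    unfold rN. replace (Nat.eqb (S (S m)) 1) with false by reflexivity.
    replace ((Nat.leb 2 (S (S m)) && Nat.leb (S (S m)) (c + 1))%bool) with true
      by (symmetry; apply andb_true_iff; split; apply Nat.leb_le; lia).
    replace (S m + 2)%nat with (S (S (S m))) by lia. replace (m + 2)%nat with (S (S m)) by lia.
    simpl. ring.
Qed.

Lemma F_identity c th rho z w : (0 < c)%nat -> 0 < th < 1 -> RHO c th rho -> 0 <= z <= 1 -> Rabs w < 1 ->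
  PSeries (hN c th z) w * Kf c (z * (1 - th)) (z * th) w * (1 - w)
  = w * (z * (1 - th) * (w - w ^ (c + 1)) - z * th * gZ c th z 1 * (1 - w)).
Proof. intros Hc Hth HR Hz Hw.
  set (h := hN c th z). set (a := z * (1 - th)). set (b := z * th). set (g1 := gZ c th z 1).
  set (M := / (1 - rho)).
  assert (HM : 0 <= M) by (destruct HR; unfold M; apply Rlt_le, Rinv_0_lt_compat; lra).
  assert (Hh : forall k, Rabs (h k) <= M) by (intros; apply (h_bound c th rho z); auto).
  assert (Hh1 : forall k, Rabs (PS_incr_1 h k) <= M).
  { intros [|k]; simpl; auto. change zero with 0. rewrite Rabs_R0; auto. }
  assert (Hhn : forall k, Rabs (PS_incr_n h (c + 1) k) <= M).
  { intros k. rewrite PS_incr_n_simplify. destruct Compare_dec.le_lt_dec; auto. change zero with 0. rewrite Rabs_R0; auto. }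
  assert (E1 : PSeries h w * Kf c a b w = PSeries (PS_incr_1 h) w - b * PSeries h w - a * PSeries (PS_incr_n h (c + 1)) w).
  { rewrite PSeries_incr_1, PSeries_incr_n. unfold Kf. ring. }
  assert (E2 : PSeries (PS_incr_1 h) w - b * PSeries h w - a * PSeries (PS_incr_n h (c + 1)) w
     = Series (fun k => rN c a b g1 k * w ^ k)).
  { unfold PSeries. rewrite <- !Series_scal_l.
    assert (exA : ex_series (fun k => PS_incr_1 h k * w ^ k)) by (eapply ex_series_bounded; eauto).
    assert (exB : ex_series (fun k => b * (h k * w ^ k))) by (apply ex_series_Rscal; eapply ex_series_bounded; eauto).
    assert (exC : ex_series (fun k => a * (PS_incr_n h (c + 1) k * w ^ k))) by (apply ex_series_Rscal; eapply ex_series_bounded; eauto).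
    rewrite <- (Series_minus _ _ exA exB).
    assert (exAB : ex_series (fun k => PS_incr_1 h k * w ^ k - b * (h k * w ^ k))).
    { apply (@ex_series_ext R_AbsRing R_NormedModule (fun k => (PS_incr_1 h k - b * h k) * w ^ k)); [intros; simpl; ring|].
      apply (ex_series_bounded _ (M + b * M)); auto. intros k.
        eapply Rle_trans; [apply Rabs_triang|]. rewrite Rabs_Ropp, Rabs_mult, (Rabs_pos_eq b) by (unfold b; nra).
        pose proof (Hh1 k). pose proof (Hh k). assert (0 <= b) by (unfold b; nra). nra. }
    rewrite <- (Series_minus _ _ exAB exC).
    apply Series_ext. intros k. pose proof (coef_id c th rho z k Hc HR Hz) as Hk. fold h a b g1 in Hk. rewrite <- Hk. ring. }
  rewrite E1, E2.
  assert (exR : ex_series (fun k => rN c a b g1 k * w ^ k)).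
  { apply (ex_series_bounded _ (Rabs a + Rabs (b * g1))); auto.
    intros k; unfold rN; destruct (Nat.eqb k 1).
    - rewrite <- Ropp_mult_distr_l, Rabs_Ropp; pose proof (Rabs_pos a); lra.
    - destruct (_ && _)%bool; [pose proof (Rabs_pos (b*g1)); lra| rewrite Rabs_R0; pose proof (Rabs_pos a); pose proof (Rabs_pos (b*g1)); lra]. }
  rewrite (Series_incr_n _ (S (S c))) by (auto; lia).
  rewrite (Series_ext _ (fun _ => 0)).
  2:{ intros n. unfold rN. replace (Nat.eqb (S (S c) + n) 1) with false by (symmetry; apply Nat.eqb_neq; lia).
      replace ((Nat.leb 2 (S (S c) + n) && Nat.leb (S (S c) + n) (c + 1))%bool) with false
        by (symmetry; apply andb_false_iff; right; apply Nat.leb_gt; lia). ring. }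
  rewrite Series_zero, Rplus_0_r. simpl Init.Nat.pred.
  rewrite rN_sum by lia. replace (c + 2)%nat with (S (c + 1)) by lia. simpl. ring.
Qed.


Lemma g1_phibar c th rho z : (0 < c)%nat -> 0 < th < 1 -> RHO c th rho -> 0 < z < 1 ->
  gZ c th z 1 = phibar c th z.
Proof. intros Hc Hth HR Hz.
  destruct (wfun_spec c th z Hth Hz) as [Hw HK].
  set (w := wfun c th z) in *.
  pose proof (F_identity c th rho z w Hc Hth HR ltac:(lra) ltac:(rewrite Rabs_pos_eq; lra)) as E.
  rewrite HK in E. unfold phibar. fold w. unfold Kf in HK.
  assert (E2 : z * (1 - th) * (w - w ^ (c + 1)) - z * th * gZ c th z 1 * (1 - w) = 0).
  { apply (Rmult_eq_reg_l w); [|lra]. rewrite <- E. ring. }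
  assert (0 < z * th) by nra.
  assert (th * z * (1 - w) <> 0) by (apply Rmult_integral_contrapositive; split; nra).
  field_simplify_eq; [nra| repeat split; lra].
Qed.

Lemma CV_h c th rho z : RHO c th rho -> 0 <= z <= 1 -> Rbar_le 1 (CV_radius (hN c th z)).
Proof. intros HR Hz. apply (radius_bounded _ (/ (1 - rho))); [intros; apply (h_bound c th rho z); auto| lra|].
  intros k. rewrite pow1, Rmult_1_r. apply (h_bound c th rho z); auto. Qed.

Lemma Phi_eq c th rho z w : (0 < c)%nat -> 0 < th < 1 -> RHO c th rho -> 0 < z < 1 ->
  w <> 0 -> Rabs w < Rmin (1/2) (z * th / 2) -> Phi c th w z = PSeries (hN c th z) w.
Proof. intros Hc Hth HR Hz Hw0 Hw.
  assert (Hb : 0 < z * th) by nra.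
  assert (Hw1 : Rabs w < 1/2) by (eapply Rlt_le_trans; [apply Hw| apply Rmin_l]).
  assert (Hw2 : Rabs w < z * th / 2) by (eapply Rlt_le_trans; [apply Hw| apply Rmin_r]).
  pose proof (F_identity c th rho z w Hc Hth HR ltac:(lra) ltac:(lra)) as E.
  rewrite (g1_phibar c th rho z Hc Hth HR Hz) in E.
  assert (HK : Kf c (z * (1 - th)) (z * th) w < 0).
  { unfold Kf. assert (Rabs (w ^ (c + 1)) <= Rabs w).
    { rewrite <- RPow_abs, pow_add, pow_1. pose proof (pow_le1 (Rabs w) c). pose proof (Rabs_pos w). nra. }
    pose proof (Rle_abs w).
    assert (Hn : - w ^ (c + 1) <= Rabs (w ^ (c + 1))) by (rewrite <- Rabs_Ropp; apply Rle_abs).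
    assert (z * (1 - th) <= 1) by nra. assert (0 <= z * (1 - th)) by nra.
    assert (- (z * (1 - th)) * w ^ (c + 1) <= Rabs w).
    { assert (- (z * (1 - th)) * w ^ (c + 1) = z * (1 - th) * (- w ^ (c+1))) by ring.
      pose proof (Rabs_pos (w ^ (c + 1))). nra. }
    lra. }
  assert (w < 1) by (pose proof (Rle_abs w); lra).
  unfold Kf in HK, E. unfold Phi.
  set (F := PSeries (hN c th z) w) in *. set (p := phibar c th z) in *.
  replace (w ^ (c + 1)) with (w ^ c * w) in * by (rewrite pow_add; ring).
  apply (Rmult_eq_reg_r ((w - z * th - z * (1 - th) * (w ^ c * w)) * (1 - w))); [| apply Rmult_integral_contrapositive; split; lra].
  rewrite <- (Rmult_assoc F), E. field. split; [auto|split; [lra|]]. intro H0. assert (w - z * th - z * (1 - th) * (w ^ c * w) = 0) by (rewrite <- H0; ring). lra.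
Qed.

Lemma varphi_eq c th rho z u : (0 < c)%nat -> 0 < th < 1 -> RHO c th rho -> 0 < z < 1 ->
  varphi c th z u = hN c th z u.
Proof. intros Hc Hth HR Hz.
  set (h := hN c th z).
  assert (Hd : 0 < Rmin (1/2) (z * th / 2)) by (apply Rmin_pos; nra).
  set (d := mkposreal _ Hd).
  assert (Hrad : Rbar_lt 0 (CV_radius h)).
  { eapply Rbar_lt_le_trans; [| apply (CV_h c th rho z HR ltac:(lra))]. simpl; lra. }
  assert (HL : is_lim (fun v => Phi c th v z) 0 (PSeries h 0)).
  { apply (is_lim_ext_loc (PSeries h)).
    - exists d. intros y Hy Hy0. symmetry. apply (Phi_eq c th rho z y Hc Hth HR Hz Hy0).
      change (Rabs (y - 0) < d) in Hy. rewrite Rminus_0_r in Hy. exact Hy.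
    - apply is_lim_continuity. apply PSeries_continuity. rewrite Rabs_R0. auto. }
  assert (Hloc : locally 0 (fun t => Phi_ext c th z t = PSeries h t)).
  { exists d. intros y Hy. change (Rabs (y - 0) < d) in Hy. rewrite Rminus_0_r in Hy.
    unfold Phi_ext. destruct (Req_EM_T y 0) as [->|Hy0].
    - rewrite (is_lim_unique _ _ _ HL). reflexivity.
    - apply (Phi_eq c th rho z y Hc Hth HR Hz Hy0 Hy). }
  unfold varphi. rewrite (Derive_n_ext_loc _ _ u 0 Hloc), Derive_n_coef by auto.
  field. apply not_0_INR. apply fact_neq_0.
Qed.


Lemma at_left_01 (P : R -> Prop) : (forall z, 0 < z < 1 -> P z) -> at_left 1 P.
Proof. intros H. exists (mkposreal 1 Rlt_0_1). intros y Hy Hlt. apply H.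
  change (Rabs (y - 1) < 1) in Hy. apply Rabs_def2 in Hy. lra. Qed.

Lemma lim_cont f x : continuity_pt f x -> filterlim f (at_left x) (locally (f x)).
Proof. intros H. apply continuity_pt_filterlim in H. intros P HP. apply H in HP.
  unfold filtermap in *. unfold at_left, within. apply filter_imp with (2 := HP). auto. Qed.

Lemma loc_01 z : 0 < z < 1 -> locally z (fun y => 0 < y < 1).
Proof. intros Hz. assert (Hd : 0 < Rmin z (1 - z)) by (apply Rmin_pos; lra).
  exists (mkposreal _ Hd). intros y Hy. change (Rabs (y - z) < Rmin z (1 - z)) in Hy.
  apply Rabs_def2 in Hy. pose proof (Rmin_l z (1 - z)). pose proof (Rmin_r z (1 - z)). simpl in *. lra. Qed.

Theorem lemma3p6 (c : nat) (th : R) :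
  (0 < c)%nat -> INR c / (INR c + 1) < th < 1 ->
  forall u : nat,
    exists L0 L1 : R,
      filterlim (fun z => varphi c th z u) (at_left 1) (locally L0) /\
      filterlim (fun z => Derive (fun y => varphi c th y u) z) (at_left 1) (locally L1) /\
      cond_exp_tau c 1 th (Z.of_nat u) = L1 / L0.
Proof.
  intros Hc Hth u.
  assert (Hth0 : 0 < th < 1).
  { pose proof (pos_INR c). assert (0 <= INR c / (INR c + 1)) by (apply Rle_mult_inv_pos; lra). lra. }
  destruct (chernoff c th Hc Hth) as [rho HR]. fold (RHO c th rho) in HR.
  assert (Hv : forall z, 0 < z < 1 -> varphi c th z u = hN c th z u)
    by (intros z Hz; apply (varphi_eq c th rho z u Hc Hth0 HR Hz)).
  destruct u as [|n].
  - exists 0, 0. split; [|split].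
    + apply (filterlim_ext_loc (fun _ => 0)). { apply at_left_01. intros z Hz. rewrite Hv; auto. }
      apply filterlim_const.
    + apply (filterlim_ext_loc (fun _ => 0)).
      { apply at_left_01. intros z Hz. rewrite (Derive_ext_loc _ (fun _ => 0)).
        - symmetry; apply Derive_const.
        - apply filter_imp with (2 := loc_01 z Hz). intros y Hy. rewrite Hv; auto. }
      apply filterlim_const.
    + unfold cond_exp_tau. rewrite (Series_ext _ (fun _ => 0)).
      * rewrite Series_zero. unfold Rdiv. ring.
      * intros [|t]; [simpl; ring|]. rewrite tp_S. simpl. ring.
  - set (p := tau_prob c 1 th (Z.of_nat (S n))).
    assert (Hp : forall z, 0 < z < 1 -> varphi c th z (S n) = PSeries p z).
    { intros z Hz. rewrite Hv by auto. reflexivity. }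
    destruct HR as [Hrho Hb].
    set (r := 2 / (1 + rho)).
    assert (Er : r * (1 + rho) = 2) by (unfold r; field; lra).
    assert (Hr : 1 < r) by (destruct (Rlt_dec 1 r); auto; nra).
    assert (Hrad : Rbar_le r (CV_radius p)).
    { apply (radius_bounded _ 1); [| lra |].
      - intros k. destruct (Hb (Z.of_nat (S n)) k) as [Hk1 Hk2]; fold p in Hk1, Hk2. rewrite Rabs_pos_eq by lra. pose proof (pow_le1 rho k ltac:(lra)). lra.
      - intros k. destruct (Hb (Z.of_nat (S n)) k) as [Hk1 Hk2]; fold p in Hk1, Hk2. rewrite Rabs_pos_eq by lra.
        assert (E : rho * r * (1 + rho) = 2 * rho) by (unfold r; field; lra).
        assert (rho * r <= 1) by (destruct (Rle_dec (rho * r) 1); auto; nra).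
        assert (0 <= rho * r) by (unfold r; apply Rmult_le_pos; [lra| apply Rlt_le, Rdiv_lt_0_compat; lra]).
        pose proof (pow_le1 (rho * r) k ltac:(lra)). rewrite Rpow_mult_distr in H1.
        pose proof (pow_le r k ltac:(lra)). nra. }
    assert (Hin : forall x, Rabs x <= 1 -> Rbar_lt (Rabs x) (CV_radius p)).
    { intros x Hx. eapply Rbar_lt_le_trans; [|apply Hrad]. simpl; lra. }
    assert (Hin' : forall x, Rabs x <= 1 -> Rbar_lt (Rabs x) (CV_radius (PS_derive p))).
    { intros x Hx. rewrite CV_radius_derive. auto. }
    exists (PSeries p 1), (PSeries (PS_derive p) 1). split; [|split].
    + apply (filterlim_ext_loc (PSeries p)). { apply at_left_01. intros z Hz. rewrite Hp; auto. }
      apply lim_cont, PSeries_continuity, Hin. rewrite Rabs_R1; lra.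
    + apply (filterlim_ext_loc (PSeries (PS_derive p))).
      { apply at_left_01. intros z Hz. rewrite (Derive_ext_loc _ (PSeries p)).
        - symmetry; apply Derive_PSeries, Hin. rewrite Rabs_pos_eq; lra.
        - apply filter_imp with (2 := loc_01 z Hz). intros y Hy. rewrite Hp; auto. }
      apply lim_cont, PSeries_continuity, Hin'. rewrite Rabs_R1; lra.
    + unfold cond_exp_tau. fold p. unfold PSeries.
      rewrite (Series_ext (fun k => p k * 1 ^ k) p) by (intros; rewrite pow1; ring).
      assert (Hex : ex_series (fun t => INR t * p t)).
      { apply ex_series_incr_1. apply (@ex_series_ext R_AbsRing R_NormedModule (fun k => PS_derive p k * 1 ^ k)).
        - intros k. unfold PS_derive. rewrite pow1. simpl. ring.
        - apply ex_series_Rabs. apply CV_disk_inside. apply Hin'. rewrite Rabs_R1; lra. }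
      rewrite Series_incr_1 by auto. simpl INR at 1. rewrite Rmult_0_l, Rplus_0_l.
      f_equal. apply Series_ext. intros k. unfold PS_derive. rewrite pow1. ring.
Qed.
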